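(* Let $\mathbf v=(v_1,\dots,v_m)$ and $\mathbf k=(k_1,\dots,k_m)$ be $m$-tuples of positive integers with $2\le k_i\le v_i$ for all $i$. Define $i\sim j$ on $\{1,\dots,m\}$ if and only if $v_i=v_j$ and $k_i=k_j$, and let $R$ be a set of equivalence class representatives. Then $C(\mathbf v,\mathbf k,2)=C(\mathbf v^R,\mathbf k^R,2)$.
   Context: For $R\subseteq\{1,\dots,m\}$, $\mathbf v^R$ denotes the tuple of entries of $\mathbf v$ in positions from $R$ (in increasing order). For tuples $\mathbf v,\mathbf k$ of positive integers of the same length $p$ with $\mathbf k\le\mathbf v$ entrywise: let $X_1,\dots,X_p$ be pairwise disjoint sets with $|X_i|=v_i$; a block is a $p$-tuple $(B_1,\dots,B_p)$ with $B_i\subseteq X_i$, $|B_i|=k_i$; a $p$-tuple of sets $(T_1,\dots,T_p)$ is $(\mathbf v,\mathbf k,2)$-admissible if $T_i\subseteq X_i$, $|T_i|\le k_i$ and $\sum|T_i|=2$, and is contained in a block if $T_i\subseteq B_i$ for all $i$. A ${\rm GC}(\mathbf v,\mathbf k,2)$ is a finite family (repetitions allowed) of blocks containing every admissible tuple in at least one block; $C(\mathbf v,\mathbf k,2)$ is the minimum number of blocks. *)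

(* Defs.v *)
From Stdlib Require Import ClassicalEpsilon.
From mathcomp Require Import all_boot.
Unset Printing Implicit Defensive.

(* The ground set for parameter tuple v = (v_1,...,v_p): the disjoint union of
   X_i = 'I_(v_i), i.e. points are pairs (i, x) with x < v_i. *)
Definition pt (v : seq nat) : finType := {i : 'I_(size v) & 'I_(nth 0 v i)}.

Definition part (v : seq nat) (A : {set pt v}) (i : 'I_(size v)) : {set pt v} :=
  [set x in A | tag x == i].

(* A block: B_i subset of X_i with |B_i| = k_i for every i (B = union of B_i). *)
Definition is_block (v k : seq nat) (B : {set pt v}) : bool :=
  [forall i : 'I_(size v), #|part v B i| == nth 0 k i].

(* A (v,k,2)-admissible tuple (T_1,...,T_p): T_i subset X_i, |T_i| <= k_i,
   sum |T_i| = 2 (represented by the union T of the T_i). *)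
Definition admissible2 (v k : seq nat) (T : {set pt v}) : bool :=
  (#|T| == 2) && [forall i : 'I_(size v), #|part v T i| <= nth 0 k i].

(* A GC(v,k,2): a finite family (with repetitions) of blocks such that every
   admissible tuple is contained in some block. *)
Definition is_GC2 (v k : seq nat) (F : seq {set pt v}) : bool :=
  all (is_block v k) F &&
  [forall T : {set pt v}, admissible2 v k T ==> has (fun B : {set pt v} => T \subset B) F].

Definition GC2_of_size (v k : seq nat) (n : nat) : bool :=
  [exists F : n.-tuple {set pt v}, is_GC2 v k F].

(* C(v,k,2): the minimum number of blocks of a GC(v,k,2)
   (0 by convention if no GC exists, which never happens when k <= v). *)
Definition C2 (v k : seq nat) : nat :=
  match excluded_middle_informative (exists n, GC2_of_size v k n) with
  | left H => ex_minn H
  | right _ => 0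
  end.

Definition subtuple (v : seq nat) {m : nat} (R : {set 'I_m}) : seq nat :=
  [seq nth 0 v (val i) | i <- enum R].

Definition simvk (v k : seq nat) (i j : nat) : bool :=
  (nth 0 v i == nth 0 v j) && (nth 0 k i == nth 0 k j).

(* Main.v *)
Require Import Defs.
From Stdlib Require Import ClassicalEpsilon.
From mathcomp Require Import all_boot.

Lemma pt_eq (v : seq nat) (x y : pt v) :
  tag x = tag y -> val (tagged x) = val (tagged y) -> x = y.
Proof.
case: x => i a; case: y => j b /= Hij; subst j => H; congr (Tagged _ _).
exact: val_inj.
Qed.

Definition phi v w (f : 'I_(size v) -> 'I_(size w))
  (hv : forall i : 'I_(size v), nth 0 v i = nth 0 w (f i)) (x : pt v) : pt w :=
  @Tagged _ (f (tag x)) (fun j => 'I_(nth 0 w j)) (cast_ord (hv (tag x)) (tagged x)).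

Lemma transfer v k w l (f : 'I_(size v) -> 'I_(size w))
  (hv : forall i : 'I_(size v), nth 0 v i = nth 0 w (f i))
  (hk : forall i : 'I_(size v), nth 0 k i = nth 0 l (f i))
  (hl : forall j : 'I_(size w), 2 <= nth 0 l j <= nth 0 w j) n :
  GC2_of_size w l n -> GC2_of_size v k n.
Proof.
move=> /existsP [F' /andP [hb hc]].
pose ph := @phi v w f hv.
pose bm (B' : {set pt w}) := [set x | ph x \in B'].
apply/existsP; exists (map_tuple bm F'); apply/andP; split.
- rewrite /= all_map; apply/allP => B' /(allP hb) hB'.
  apply/forallP => i /=. rewrite hk -(eqP (forallP hB' (f i))).
  have ->: part w B' (f i) = ph @: part v (bm B') i.
    apply/setP => y; rewrite !inE; apply/idP/imsetP.
    - case/andP => yB /eqP ty.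
      have hy : val (tagged y) < nth 0 v i by rewrite hv -ty; exact: ltn_ord.
      pose x : pt v := Tagged (fun j : 'I_(size v) => 'I_(nth 0 v j)) (Ordinal hy).
      have ex : ph x = y by apply: pt_eq => //=.
      exists x => //.
      by rewrite !inE ex yB /= eqxx.
    - case=> x; rewrite !inE => /andP [xB /eqP tx] ->.
      by rewrite xB /= tx eqxx.
  rewrite card_in_imset // => x y; rewrite !inE => /andP [_ /eqP tx] /andP [_ /eqP ty] e.
  apply: pt_eq; first by rewrite tx ty.
  by have := congr1 (fun z : pt w => val (tagged z)) e.
- apply/forallP => T; apply/implyP => /andP [/eqP T2 _].
  rewrite /= has_map.
  have sub: forall B' : {set pt w}, ph @: T \subset B' -> T \subset bm B'.
    move=> B' /subsetP h; apply/subsetP => x xT; rewrite inE; apply: h.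
    exact: imset_f.
  suff [B' B'F hB']: exists2 B' : {set pt w}, B' \in F' & ph @: T \subset B'.
    by apply/hasP; exists B' => //; apply: sub.
  have admw : forall T' : {set pt w}, #|T'| = 2 -> exists2 B' : {set pt w}, B' \in F' & T' \subset B'.
    move=> T' h2; have /implyP := forallP hc T'.
    have -> : admissible2 w l T'.
      rewrite /admissible2 h2 eqxx /=; apply/forallP => j.
      apply: leq_trans (subset_leq_card (_ : part w T' j \subset T')) _.
        by apply/subsetP => z; rewrite inE => /andP [].
      by rewrite h2; case/andP: (hl j).
    by move=> /(_ isT) /hasP [B' ? ?]; exists B'.
  case: (eqVneq #|ph @: T| 2) => [h2|hn2]; first exact: admw.
  have [x xT]: exists x, x \in T.
    by apply/set0Pn; rewrite -card_gt0 T2.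
  have xi : ph x \in ph @: T by exact: imset_f.
  have h1 : #|ph @: T| == 1.
    have le2 : #|ph @: T| <= 2 by rewrite -T2 leq_imset_card.
    have pos : 0 < #|ph @: T| by rewrite card_gt0; apply/set0Pn; exists (ph x).
    by move: le2 hn2 pos; case: #|_| => [|[|[|//]]].
  case/cards1P: h1 => y0 hy0.
  move: xi; rewrite hy0 inE => /eqP ey0; rewrite -ey0 in hy0.
  set y := ph x in hy0 *.
  have hw2 : 2 <= nth 0 w (tag y) by case/andP: (hl (tag y)) => h1 h2; exact: leq_trans h1 h2.
  set b := if val (tagged y) == 0 then 1 else 0.
  have hbw : b < nth 0 w (tag y) by apply: leq_trans hw2; rewrite /b; case: ifP.
  pose z : pt w := Tagged (fun j : 'I_(size w) => 'I_(nth 0 w j)) (Ordinal hbw).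
  have yz : y != z.
    apply/eqP => e; have e2 : val (tagged y) = b := congr1 (fun u : pt w => val (tagged u)) e.
    by move: e2; rewrite /b; case: eqP => [->|h] // e3; apply: h.
  have [B' B'F hs] := admw [set y; z] ltac:(by rewrite cards2 yz).
  exists B' => //; rewrite -ey0 sub1set; apply: (subsetP hs).
  by rewrite !inE eqxx.
Qed.

Lemma C2_eq v k w l :
  (forall n, GC2_of_size v k n = GC2_of_size w l n) -> C2 v k = C2 w l.
Proof.
move=> h; rewrite /C2.
case: excluded_middle_informative => H1; case: excluded_middle_informative => H2.
- case: ex_minnP => m1 p1 m1min; case: ex_minnP => m2 p2 m2min.
  by apply/eqP; rewrite eqn_leq m1min ?h // m2min // -h.
- by case: H2; case: H1 => n p; exists n; rewrite -h.
- by case: H1; case: H2 => n p; exists n; rewrite h.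
- by [].
Qed.

Theorem corollary3p14 (v k : seq nat) (R : {set 'I_(size v)}) :
  size k = size v ->
  (forall i, i < size v -> 2 <= nth 0 k i <= nth 0 v i) ->
  (* R is a set of representatives of the equivalence classes of ~ *)
  (forall i : 'I_(size v), #|[set j in R | simvk v k i j]| = 1) ->
  C2 v k = C2 (subtuple v R) (subtuple k R).
Proof.
move=> sk hkv hR.
set vR := subtuple v R; set kR := subtuple k R.
have szv : size vR = size (enum R) by rewrite /vR /subtuple size_map.
have szk : size kR = size (enum R) by rewrite /kR /subtuple size_map.
have nthR : forall t : 'I_(size vR), exists j : 'I_(size v),
    [/\ j \in R, nth 0 vR t = nth 0 v j & nth 0 kR t = nth 0 k j].
  move=> t; have ht : t < size (enum R) by rewrite -szv.
  have [x0 _] : exists x0 : 'I_(size v), true.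
    by move: ht; case: (enum R) => [|x0 s] //= _; exists x0.
  exists (nth x0 (enum R) t); split.
  - by rewrite -mem_enum mem_nth.
  - by rewrite /vR /subtuple (nth_map x0).
  - by rewrite /kR /subtuple (nth_map x0).
have hlv : forall j : 'I_(size v), 2 <= nth 0 k j <= nth 0 v j.
  by move=> j; apply: hkv.
have hlR : forall t : 'I_(size vR), 2 <= nth 0 kR t <= nth 0 vR t.
  by move=> t; have [j [_ -> ->]] := nthR t; apply: hlv.
apply: C2_eq => n; apply/idP/idP; last first.
- have [f hf] : exists f : 'I_(size v) -> 'I_(size vR),
      forall i : 'I_(size v), nth 0 v i = nth 0 vR (f i) /\ nth 0 k i = nth 0 kR (f i).
    apply: (@fin_all_exists _ (fun _ => 'I_(size vR)) (fun (i : 'I_(size v)) (j : 'I_(size vR)) => nth 0 v i = nth 0 vR j /\ nth 0 k i = nth 0 kR j)) => i.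
    have : 0 < #|[set j in R | simvk v k i j]| by rewrite hR.
    rewrite card_gt0 => /set0Pn [r]; rewrite !inE => /andP [rR /andP [/eqP e1 /eqP e2]].
    have hi : index r (enum R) < size vR by rewrite szv index_mem mem_enum.
    exists (Ordinal hi) => /=.
    rewrite /vR /kR /subtuple !(nth_map r) ?index_mem ?mem_enum // nth_index ?mem_enum //.
  apply: (@transfer _ _ _ _ f) => // i; [exact: (hf i).1 | exact: (hf i).2].
- have [f hf] : exists f : 'I_(size vR) -> 'I_(size v),
      forall t : 'I_(size vR), nth 0 vR t = nth 0 v (f t) /\ nth 0 kR t = nth 0 k (f t).
    apply: (@fin_all_exists _ (fun _ => 'I_(size v)) (fun (t : 'I_(size vR)) (j : 'I_(size v)) => nth 0 vR t = nth 0 v j /\ nth 0 kR t = nth 0 k j)) => t; have [j [_ e1 e2]] := nthR t; by exists j.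
  apply: (@transfer _ _ _ _ f) => // t; [exact: (hf t).1 | exact: (hf t).2].
Qed.
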